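(* Let $P$ be a strict, monotone span program on $1+n$ input bits with inner product space $V=\mathbb{C}^{[d]}$ (with standard basis $\{\lvert l\rangle\}_{l\in[d]}$), target vector $\lvert t\rangle$, and input-vector index sets $I_{1,1},\dots,I_{1+n,1}$, where $\lvert I_{1,1}\rvert=1$. For $s_1,s_2>0$, let $P'$ be either $P_{\mathrm{AND}}(s_1,s_2)$ or $P_{\mathrm{OR}}(s_1,s_2)$, and let $Q^{r\otimes}$ be the reduced tensor-product composition of $P'$ into the first input of $P$. Then $$\bigl\lVert \mathrm{abs}\bigl(B_{Q^{r\otimes}}\bigr)\bigr\rVert^2 \;\le\; \frac{\sqrt{s_1}+\sqrt{s_2}}{\sqrt{s_1+s_2}}\,\bigl\lVert \mathrm{abs}\bigl(B_{P}\bigr)\bigr\rVert^2 .$$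
   Context: A strict, monotone span program $P$ on $N$ input bits consists of a finite-dimensional inner product space $V$ over $\mathbb{C}$, a target vector $\lvert t\rangle\in V$, pairwise disjoint finite index sets $I_{k,1}$ ($k\in[N]$), and input vectors $\lvert v_i\rangle\in V$ for $i\in\bigcup_k I_{k,1}$. It computes $f_P:\{0,1\}^N\to\{0,1\}$ with $f_P(x)=1$ iff $\lvert t\rangle\in\mathrm{Span}\{\lvert v_i\rangle: i\in I_{k,1},\,x_k=1\}$. For a span program with a fixed orthonormal basis of $V$, $B_P$ denotes the matrix (in that basis) whose first column is $\lvert t\rangle$ and whose remaining columns are the input vectors $\lvert v_i\rangle$, $i\in\bigcup_k I_{k,1}$ (this is the biadjacency matrix of the associated bipartite graph on input $1^N$). $\mathrm{abs}(M)$ is the entrywise absolute value of $M$ and $\lVert\cdot\rVert$ is the operator norm. $P_{\mathrm{AND}}(s_1,s_2)$: space $\mathbb{C}^2$, target $(\alpha_1,\alpha_2)^T$, input vectors $\lvert v_1\rangle=(\beta_1,0)^T$, $\lvert v_2\rangle=(0,\beta_2)^T$, with $I_{1,1}=\{1\}$, $I_{2,1}=\{2\}$. $P_{\mathrm{OR}}(s_1,s_2)$: space $\mathbb{C}$, target $\delta$, input vectors $\lvert v_1\rangle=\epsilon_1$, $\lvert v_2\rangle=\epsilon_2$, $I_{1,1}=\{1\}$, $I_{2,1}=\{2\}$. Here $\alpha_j=\epsilon_j=(s_j/(s_1+s_2))^{1/4}$, $\beta_j=1$, $\delta=1$; both use the standard basis. Reduced tensor-product composition of $P'$ (space $V'$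 with a fixed orthonormal basis, target $\lvert t'\rangle$, input vectors $\lvert v'_{i'}\rangle$, $i'\in I'_{k,1}$, $k\in[m]$) into the first input of $P$ (space $\mathbb{C}^{[d]}$): let $Z=\{l\in[d]:\langle l\vert v_i\rangle=0\ \forall i\in I_{1,1}\}$; for $l\in[d]$ let $V_l=V'$ and $\lvert\pi_l\rangle=\lvert t'\rangle$ if $l\notin Z$, and $V_l=\mathbb{C}$, $\lvert\pi_l\rangle=\lVert\lvert t'\rangle\rVert$ if $l\in Z$. The composed program $Q^{r\otimes}$ is strict and monotone on $m+n$ bits, with space $\bigoplus_{l\in[d]}V_l$ (basis the union of the bases of the summands), target $\sum_l\langle l\vert t\rangle\lvert\pi_l\rangle_{V_l}$, input index sets $I_{11}\times I'_{k1}$ for $k\le m$ with vectors $\lvert v_{(i,i')}\rangle=\sum_l\langle l\vert v_i\rangle\lvert v'_{i'}\rangle_{V_l}$, and index sets $I_{j1}$ for the remaining inputs ($k>m$, $j=k-m+1$) with vectors $\sum_l\langle l\vert v_\iota\rangle\lvert\pi_l\rangle_{V_l}$. *)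

(* Defs.v *)
From mathcomp Require Import all_boot all_order all_algebra.
From mathcomp Require Import classical_sets reals.
From mathcomp.real_closed Require Import complex.
Set Implicit Arguments.
Unset Strict Implicit.
Unset Printing Implicit Defensive.
Import Order.TTheory GRing.Theory Num.Theory.
Local Open Scope ring_scope.

Definition cabs (R : realType) (z : R[i]) : R :=
  Num.sqrt (complex.Re z ^+ 2 + complex.Im z ^+ 2).

Definition cvnorm (R : realType) (T : finType) (x : T -> R[i]) : R :=
  Num.sqrt (\sum_(a : T) cabs (x a) ^+ 2).

(* A strict, monotone span program.
   - [sp_basis]: a finite type indexing a fixed orthonormal basis of V
     (so V = C^{sp_basis}; coordinates in that basis are used throughout);
   - [sp_ninp]: the number N of input bits;
   - [sp_idx]: the (finite) disjoint union of the index sets I_{k,1};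
   - [sp_t]: the target vector;  [sp_v i]: the input vector |v_i>;
   - [sp_lab i] = k (0-based) means i \in I_{k+1,1}  (so the I_{k,1} are
     pairwise disjoint by construction). *)
Record spanprog (R : realType) := SpanProg {
  sp_basis : finType;
  sp_ninp : nat;
  sp_idx : finType;
  sp_t : sp_basis -> R[i];
  sp_v : sp_idx -> sp_basis -> R[i];
  sp_lab : sp_idx -> nat }.
Arguments sp_basis {R} s.
Arguments sp_ninp {R} s.
Arguments sp_idx {R} s.
Arguments sp_t {R} s _.
Arguments sp_v {R} s _ _.
Arguments sp_lab {R} s _.

Definition sp_wf (R : realType) (P : spanprog R) : Prop :=
  forall i, (sp_lab P i < sp_ninp P)%N.

(* The index set I_{k+1,1} (0-based k). *)
Definition sp_I (R : realType) (P : spanprog R) (k : nat) : {set sp_idx P} :=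
  [set i | sp_lab P i == k].

(* B_P: first column is |t>, the remaining columns are the input vectors
   (column [None] = target, column [Some i] = |v_i>). *)
Definition Bmat (R : realType) (P : spanprog R) :
    sp_basis P -> option (sp_idx P) -> R[i] :=
  fun l c => match c with None => sp_t P l | Some i => sp_v P i l end.
Arguments Bmat {R} P _ _.

Definition absmx (R : realType) (rT cT : finType) (A : rT -> cT -> R[i]) :
    rT -> cT -> R := fun r c => cabs (A r c).

Definition opnorm (R : realType) (rT cT : finType) (A : rT -> cT -> R) : R :=
  sup [set r : R | exists x : cT -> R,
         \sum_(j : cT) x j ^+ 2 <= 1 /\
         r = Num.sqrt (\sum_(i : rT) (\sum_(j : cT) A i j * x j) ^+ 2)].

Section Composition.
Variables (R : realType) (P' P : spanprog R).

Definition rt_Z : pred (sp_basis P) :=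
  fun l => [forall i : sp_idx P, (sp_lab P i == 0%N) ==> (sp_v P i l == 0)].

(* Basis of (+)_l V_l : pairs (l, None) for l in Z (V_l = C) and
   (l, Some a) for l not in Z (V_l = V', a a basis index of V'). *)
Definition rt_basis_pred : pred (sp_basis P * option (sp_basis P')) :=
  fun la => (rt_Z la.1) == (la.2 == None).

Definition rt_basis : finType := {la : sp_basis P * option (sp_basis P') | rt_basis_pred la}.

(* Input indices: (I_{1,1} x I'_{k,1})_k  and  I_{j,1} for j >= 2. *)
Definition rt_idx : finType :=
  ({i : sp_idx P | sp_lab P i == 0%N} * sp_idx P' + {i : sp_idx P | sp_lab P i != 0%N})%type.

(* |pi_l> in V_l, written in the basis of V_l *)
Definition rt_pi (b : option (sp_basis P')) : R[i] :=
  match b with None => ((cvnorm (sp_t P'))%:C)%C | Some a => sp_t P' a end.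

Definition rt_t (x : rt_basis) : R[i] := sp_t P (val x).1 * rt_pi (val x).2.

(* for (i,i'): sum_l <l|v_i> |v'_{i'}>_{V_l}; for l in Z the coefficient
   <l|v_i> vanishes (i in I_{1,1}), so the coordinate there is 0. *)
Definition rt_v (c : rt_idx) (x : rt_basis) : R[i] :=
  match c with
  | inl (i, i') => sp_v P (val i) (val x).1 *
                   match (val x).2 with None => 0 | Some a => sp_v P' i' a end
  | inr j => sp_v P (val j) (val x).1 * rt_pi (val x).2
  end.

Definition rt_lab (c : rt_idx) : nat :=
  match c with
  | inl (_, i') => sp_lab P' i'
  | inr j => (sp_ninp P' + sp_lab P (val j) - 1)%N
  end.

(* Q^{r (x)} : reduced tensor-product composition of P' into the first
   input of P, on m + n bits where m = #inputs of P', 1 + n = #inputs of P. *)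
Definition rtcomp : spanprog R :=
  @SpanProg R rt_basis (sp_ninp P' + (sp_ninp P - 1)) rt_idx rt_t rt_v rt_lab.

End Composition.

(* alpha_j = eps_j = (s_j / (s1 + s2))^(1/4), j in {0,1} (0-based). *)
Definition quartic_weight (R : realType) (s1 s2 : R) (j : 'I_2) : R :=
  Num.sqrt (Num.sqrt ((if j == ord0 then s1 else s2) / (s1 + s2))).

Definition P_AND (R : realType) (s1 s2 : R) : spanprog R :=
  @SpanProg R 'I_2 2 'I_2
    (fun l => ((quartic_weight s1 s2 l)%:C)%C)
    (fun i l => if i == l then 1 else 0)
    (fun i => nat_of_ord i).

Definition P_OR (R : realType) (s1 s2 : R) : spanprog R :=
  @SpanProg R 'I_1 2 'I_2
    (fun _ => 1)
    (fun i _ => ((quartic_weight s1 s2 i)%:C)%C)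
    (fun i => nat_of_ord i).

(* Main.v *)
Require Import Defs.
From mathcomp Require Import all_boot all_order all_algebra.
From mathcomp Require Import classical_sets reals.
From mathcomp.real_closed Require Import complex.
From mathcomp Require Import ring lra.
Import Order.TTheory GRing.Theory Num.Theory.
Local Open Scope ring_scope.
Set Implicit Arguments. Unset Strict Implicit.

Section H.
Variable R : realType.

Lemma sum_sig (T : finType) (p : pred T) (F : T -> R) :
  \sum_(j : {i | p i}) F (val j) = \sum_(i | p i) F i.
Proof.
rewrite (reindex_omap (val : {i | p i} -> T) insub); last first.
  by move=> i Pi; rewrite insubT.
by apply: eq_bigl=> -[i iA]/=; rewrite insubT ?iA /= eqxx.
Qed.

Lemma sum_option (T : finType) (F : option T -> R) :
  \sum_(o : option T) F o = F None + \sum_(t : T) F (Some t).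
Proof.
by rewrite ![index_enum _]unlock [@Finite.enum in LHS]unlock /= big_cons big_map.
Qed.

Lemma cabsM (a b : R[i]) : cabs (a * b) = cabs a * cabs b.
Proof.
have := @Normc.normcM R a b. by case: a b => [a1 a2] [b1 b2].
Qed.

Lemma cabs_ge0 (a : R[i]) : 0 <= cabs a.
Proof. exact: sqrtr_ge0. Qed.

Lemma cabs_real (r : R) : cabs (r%:C)%C = `|r|.
Proof. by rewrite /cabs /= expr0n /= addr0 sqrtr_sqr. Qed.

Lemma cabs0 : cabs (0 : R[i]) = 0.
Proof. by rewrite /cabs /= expr0n /= addr0 sqrtr0. Qed.
Lemma cabs1 : cabs (1 : R[i]) = 1.
Proof. by rewrite /cabs /= expr0n /= expr1n addr0 sqrtr1. Qed.

Definition Fq (rT cT : finType) (A : rT -> cT -> R) (x : cT -> R) :=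
  \sum_(i : rT) (\sum_(j : cT) A i j * x j) ^+ 2.

Lemma sq_le_sum (T : finType) (x : T -> R) j : x j ^+ 2 <= \sum_k x k ^+ 2.
Proof.
rewrite (bigD1 j) //= lerDl; apply: sumr_ge0 => k _; exact: sqr_ge0.
Qed.

Lemma opnorm_has_sup (rT cT : finType) (A : rT -> cT -> R) :
  has_sup [set r : R | exists x : cT -> R,
         \sum_(j : cT) x j ^+ 2 <= 1 /\
         r = Num.sqrt (\sum_(i : rT) (\sum_(j : cT) A i j * x j) ^+ 2)].
Proof.
split.
  exists (Num.sqrt (\sum_(i : rT) (\sum_(j : cT) A i j * 0) ^+ 2)).
  exists (fun _ => 0); split => //.
  by rewrite big1 // => j _; rewrite expr0n.
exists (Num.sqrt (\sum_(i : rT) (\sum_(j : cT) `|A i j|) ^+ 2)).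
move=> r [x [hx ->]].
apply: ler_wsqrtr; apply: ler_sum => i _.
have h1 : `|\sum_j A i j * x j| <= \sum_j `|A i j|.
  apply: le_trans (ler_norm_sum _ _ _) _.
  apply: ler_sum => j _; rewrite normrM.
  have : x j ^+ 2 <= 1 := le_trans (sq_le_sum x j) hx.
  move=> hj; have hxj : `|x j| <= 1.
    rewrite -(@ler_pXn2r _ 2) ?nnegrE ?normr_ge0 // ?expr1n ?real_normK ?num_real //.
  by rewrite ler_piMr.
have h0 : 0 <= `|\sum_j A i j * x j| := normr_ge0 _.
rewrite -real_normK ?num_real //.
set a := `|_| in h1 h0 *; set b := \sum_j _ in h1 *.
nra.
Qed.

Lemma opnorm_ub (rT cT : finType) (A : rT -> cT -> R) x :
  \sum_j x j ^+ 2 <= 1 -> Num.sqrt (Fq A x) <= opnorm A.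
Proof.
move=> hx; apply: sup_upper_bound; first exact: opnorm_has_sup.
by exists x.
Qed.

Lemma opnorm_ge0 (rT cT : finType) (A : rT -> cT -> R) : 0 <= opnorm A.
Proof.
apply: le_trans (opnorm_ub A (x := fun _ => 0) _).
  exact: sqrtr_ge0.
by rewrite big1 // => j _; rewrite expr0n.
Qed.

Lemma opnorm_le (rT cT rT' cT' : finType) (A : rT -> cT -> R)
   (B : rT' -> cT' -> R) k : 0 <= k ->
  (forall x, \sum_j x j ^+ 2 <= 1 -> exists x', \sum_j x' j ^+ 2 <= 1 /\ Fq B x <= k * Fq A x') ->
  opnorm B ^+ 2 <= k * opnorm A ^+ 2.
Proof.
move=> k0 H.
have hle : opnorm B <= Num.sqrt k * opnorm A.
  apply: ge_sup; first by case: (opnorm_has_sup B).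
  move=> r [x [hx ->]].
  have [x' [hx' hF]] := H x hx.
  apply: le_trans (ler_wsqrtr hF) _.
  rewrite sqrtrM //; apply: ler_wpM2l; first exact: sqrtr_ge0.
  exact: opnorm_ub.
have h0 := opnorm_ge0 B.
have hk : Num.sqrt k ^+ 2 = k by rewrite sqr_sqrtr.
have hk0 : 0 <= Num.sqrt k := sqrtr_ge0 k.
have hA := opnorm_ge0 A.
rewrite -hk -exprMn.
set a := opnorm B in hle h0 *; set b := _ * _ in hle *.
nra.
Qed.

Lemma Fq_abs (rT cT : finType) (A : rT -> cT -> R) x :
  (forall i j, 0 <= A i j) -> Fq A x <= Fq A (fun j => `|x j|).
Proof.
move=> hA; apply: ler_sum => i _.
have h1 : `|\sum_j A i j * x j| <= \sum_j A i j * `|x j|.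
  apply: le_trans (ler_norm_sum _ _ _) _.
  by apply: ler_sum => j _; rewrite normrM ger0_norm.
have h0 : 0 <= `|\sum_j A i j * x j| := normr_ge0 _.
rewrite -real_normK ?num_real //.
set a := `|_| in h1 h0 *; set b := \sum_j _ in h1 *.
nra.
Qed.

Section G.
Variables (P' P : spanprog R) (i0 : sp_idx P).
Hypothesis hI : forall i, (sp_lab P i == 0%N) = (i == i0).

Let Q := rtcomp P' P.
Definition sig0 := {i : sp_idx P | sp_lab P i == 0%N}.
Definition sigN := {i : sp_idx P | sp_lab P i != 0%N}.
Definition i0' : sig0 := exist _ i0 (eq_ind_r is_true (eqxx i0) (hI i0)).

Lemma sig0_eq (j : sig0) : j = i0'.
Proof. apply: val_inj => /=; apply/eqP; rewrite -hI; exact: (valP j). Qed.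

Variable x : option (rt_idx P' P) -> R.
Definition ax c := `|x c|.
Definition yv (i' : sp_idx P') := ax (Some (inl (i0', i'))).
Definition zv := Num.sqrt (\sum_i' yv i' ^+ 2).
Definition Wv (l : sp_basis P) := cabs (sp_t P l) * ax None +
   \sum_(j : sigN) cabs (sp_v P (val j) l) * ax (Some (inr j)).
Definition Uv (l : sp_basis P) := cabs (sp_v P i0 l).
Definition RV l (b : option (sp_basis P')) :=
  cabs (@rt_pi R P' b) * Wv l + Uv l *
   match b with None => 0 | Some a => \sum_i' cabs (sp_v P' i' a) * yv i' end.

Lemma sum_sig0 (F : sig0 -> R) : \sum_(j : sig0) F j = F i0'.
Proof.
rewrite [LHS](bigD1 i0') //=.
have -> : \sum_(j | j != i0') F j = 0 by apply: big1 => j; rewrite (sig0_eq j) eqxx.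
by rewrite addr0.
Qed.

Lemma sum_inl (F : sig0 * sp_idx P' -> R) : \sum_p F p = \sum_i' F (i0', i').
Proof.
rewrite (eq_bigr (fun p => F (p.1, p.2))); last by case.
by rewrite -(pair_bigA _ (fun i i' => F (i, i'))) sum_sig0.
Qed.

Lemma row_eq (r : rt_basis P' P) :
  \sum_c absmx (Bmat Q) r c * ax c = RV (val r).1 (val r).2.
Proof.
rewrite sum_option big_sumType /= sum_inl.
rewrite /RV /Wv /absmx /= /rt_t /rt_v /=.
rewrite cabsM mulrDr mulr_sumr.
case: r => -[l b] /= _.
rewrite /Uv.
case: b => [a|] /=.
- rewrite mulr_sumr -!addrA; congr (_ + _); first by rewrite mulrCA mulrA.
  rewrite addrC; congr (_ + _).
    by apply: eq_bigr => j _; rewrite cabsM; ring.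
  by apply: eq_bigr => i' _; rewrite cabsM /yv; ring.
- rewrite big1; last by move=> i' _; rewrite mulr0 cabs0 mul0r.
  rewrite add0r mulr0 addr0 mulrCA; congr (_ + _); first by ring.
  by apply: eq_bigr => j _; rewrite cabsM; ring.
Qed.

Definition grp (l : sp_basis P) :=
  \sum_(b : option (sp_basis P') | @rt_Z R P l == (b == None)) RV l b ^+ 2.

Lemma FB_ax : Fq (absmx (Bmat Q)) ax = \sum_l grp l.
Proof.
rewrite /Fq (eq_bigr (fun r : rt_basis P' P => RV (val r).1 (val r).2 ^+ 2)); last first.
  by move=> r _; rewrite row_eq.
rewrite (@sum_sig _ (@rt_basis_pred R P' P) (fun p => RV p.1 p.2 ^+ 2)).
rewrite /grp pair_big_dep /=.
by apply: eq_bigl => -[l b].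
Qed.

Lemma grp_Z l : @rt_Z R P l -> grp l = RV l None ^+ 2.
Proof.
move=> hz; rewrite /grp big_mkcond sum_option /= hz eqxx /=.
by rewrite big1 ?addr0 // => a _.
Qed.

Lemma grp_nZ l : ~~ @rt_Z R P l -> grp l = \sum_a RV l (Some a) ^+ 2.
Proof.
move=> hz; rewrite /grp big_mkcond sum_option /= (negPf hz) /= add0r.
by apply: eq_bigr => a _.
Qed.

Lemma U_Z l : @rt_Z R P l -> Uv l = 0.
Proof.
move=> /forallP /(_ i0); rewrite hI eqxx /= => /eqP h.
by rewrite /Uv h cabs0.
Qed.

Definition xp (c : option (sp_idx P)) : R :=
  match c with None => ax None
  | Some i => if i == i0 then zv else
      match (insub i : option sigN) with Some j => ax (Some (inr j)) | None => 0 end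
  end.

Lemma sum_sigN (f : sigN -> R) : \sum_(j : sigN) f j =
  \sum_(i | i != i0) match (insub i : option sigN) with Some j => f j | None => 0 end.
Proof.
rewrite (eq_bigl (fun i => sp_lab P i != 0%N)); last by move=> i; rewrite hI.
apply: (etrans _ (@sum_sig _ (fun i => sp_lab P i != 0%N)
   (fun i => match (insub i : option sigN) with Some j => f j | None => 0 end))).
by apply: eq_bigr => j _; rewrite valK.
Qed.

Lemma ax_sq c : ax c ^+ 2 = x c ^+ 2.
Proof. by rewrite /ax real_normK ?num_real. Qed.

Lemma ax_ge0 c : 0 <= ax c.
Proof. exact: normr_ge0. Qed.

Lemma zv_sq : zv ^+ 2 = \sum_i' yv i' ^+ 2.
Proof. by rewrite /zv sqr_sqrtr // sumr_ge0 // => i _; exact: sqr_ge0. Qed.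

Lemma xp_sum : \sum_c xp c ^+ 2 = \sum_c x c ^+ 2.
Proof.
rewrite !sum_option big_sumType sum_inl /= ax_sq; congr (_ + _).
rewrite (bigD1 i0) //= eqxx zv_sq; congr (_ + _).
  by apply: eq_bigr => i' _; rewrite /yv ax_sq.
rewrite sum_sigN; apply: eq_bigr => i hi; rewrite (negPf hi).
by case: (insub i) => [j|]; rewrite ?ax_sq ?expr0n.
Qed.

Lemma rowA l : \sum_c absmx (Bmat P) l c * xp c = Wv l + Uv l * zv.
Proof.
rewrite sum_option /= (bigD1 i0) //= eqxx /Wv /Uv /absmx /=.
rewrite -addrA; congr (_ + _); rewrite addrC; congr (_ + _).
rewrite sum_sigN; apply: eq_bigr => i hi; rewrite (negPf hi).
by case: insubP => [j _ <-|_] /=; rewrite ?mulr0.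
Qed.

Lemma Wv_ge0 l : 0 <= Wv l.
Proof.
apply: addr_ge0; first by apply: mulr_ge0; [exact: cabs_ge0|exact: ax_ge0].
by apply: sumr_ge0 => j _; apply: mulr_ge0; [exact: cabs_ge0|exact: ax_ge0].
Qed.
Lemma Uv_ge0 l : 0 <= Uv l. Proof. exact: cabs_ge0. Qed.
Lemma zv_ge0 : 0 <= zv. Proof. exact: sqrtr_ge0. Qed.
Lemma yv_ge0 i : 0 <= yv i. Proof. exact: ax_ge0. Qed.

Lemma main_gen c : \sum_c x c ^+ 2 <= 1 ->
  (forall l, grp l <= c * (Wv l + Uv l * zv) ^+ 2) ->
  exists x', \sum_j x' j ^+ 2 <= 1 /\
    Fq (absmx (Bmat Q)) x <= c * Fq (absmx (Bmat P)) x'.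
Proof.
move=> hx hl; exists xp; split; first by rewrite xp_sum.
apply: le_trans (Fq_abs _ _) _; first by move=> r col; exact: cabs_ge0.
rewrite -/ax FB_ax /Fq mulr_sumr; apply: ler_sum => l _.
by rewrite rowA.
Qed.
End G.


Lemma cs_ineq (q0 q1 y0 y1 : R) :
  (q0 * y0 + q1 * y1) ^+ 2 <= (q0 ^+ 2 + q1 ^+ 2) * (y0 ^+ 2 + y1 ^+ 2).
Proof.
rewrite -subr_ge0.
have -> : (q0 ^+ 2 + q1 ^+ 2) * (y0 ^+ 2 + y1 ^+ 2) - (q0 * y0 + q1 * y1) ^+ 2
   = (q0 * y1 - q1 * y0) ^+ 2 by ring.
exact: sqr_ge0.
Qed.

Lemma and_ineq (q0 q1 y0 y1 W U : R) : 0 <= q0 -> 0 <= q1 -> 0 <= y0 -> 0 <= y1 ->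
  0 <= W -> 0 <= U -> 1 <= q0 ^+ 2 + q1 ^+ 2 ->
  (q0 * W + U * y0) ^+ 2 + (q1 * W + U * y1) ^+ 2 <=
  (q0 ^+ 2 + q1 ^+ 2) * (W + U * Num.sqrt (y0 ^+ 2 + y1 ^+ 2)) ^+ 2.
Proof.
move=> h0 h1 hy0 hy1 hW hU hc.
have hz2 : Num.sqrt (y0 ^+ 2 + y1 ^+ 2) ^+ 2 = y0 ^+ 2 + y1 ^+ 2.
  by rewrite sqr_sqrtr // addr_ge0 // sqr_ge0.
have hz0 := sqrtr_ge0 (y0 ^+ 2 + y1 ^+ 2).
set z := Num.sqrt _ in hz2 hz0 *.
set c := q0 ^+ 2 + q1 ^+ 2 in hc *.
have hcs := cs_ineq q0 q1 y0 y1; rewrite -/c -hz2 in hcs.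
set sx := q0 * y0 + q1 * y1 in hcs.
have hs0 : 0 <= sx by rewrite /sx; apply: addr_ge0; apply: mulr_ge0.
have hs : sx <= c * z.
  have hcz : 0 <= c * z by apply: mulr_ge0 => //; exact: le_trans ler01 hc.
  have : sx ^+ 2 <= (c * z) ^+ 2.
    apply: le_trans hcs _; rewrite exprMn; apply: ler_wpM2r; first exact: sqr_ge0.
    by rewrite expr2 ler_peMl // (le_trans ler01 hc).
  move=> h; nra.
have -> : (q0 * W + U * y0) ^+ 2 + (q1 * W + U * y1) ^+ 2 =
   c * W ^+ 2 + 2 * W * U * sx + U ^+ 2 * z ^+ 2.
  rewrite hz2 /c /sx; ring.
have hWU : 0 <= W * U := mulr_ge0 hW hU.
have hz20 : 0 <= U ^+ 2 * z ^+ 2 by rewrite mulr_ge0 // sqr_ge0.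
nra.
Qed.

Lemma or_ineq (q0 q1 y0 y1 W U : R) : 0 <= q0 -> 0 <= q1 -> 0 <= y0 -> 0 <= y1 ->
  0 <= W -> 0 <= U -> 1 <= q0 ^+ 2 + q1 ^+ 2 ->
  (W + U * (q0 * y0 + q1 * y1)) ^+ 2 <=
  (q0 ^+ 2 + q1 ^+ 2) * (W + U * Num.sqrt (y0 ^+ 2 + y1 ^+ 2)) ^+ 2.
Proof.
move=> h0 h1 hy0 hy1 hW hU hc.
have hz2 : Num.sqrt (y0 ^+ 2 + y1 ^+ 2) ^+ 2 = y0 ^+ 2 + y1 ^+ 2.
  by rewrite sqr_sqrtr // addr_ge0 // sqr_ge0.
have hz0 := sqrtr_ge0 (y0 ^+ 2 + y1 ^+ 2).
set z := Num.sqrt _ in hz2 hz0 *.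
set c := q0 ^+ 2 + q1 ^+ 2 in hc *.
have hc0 : 0 <= c by exact: le_trans ler01 hc.
have hr2 : Num.sqrt c ^+ 2 = c by rewrite sqr_sqrtr.
have hr0 := sqrtr_ge0 c.
have hr1 : 1 <= Num.sqrt c by rewrite -sqrtr1 ler_wsqrtr.
set r := Num.sqrt c in hr2 hr0 hr1.
have hcs := cs_ineq q0 q1 y0 y1; rewrite -/c -hz2 -hr2 in hcs.
set sx := q0 * y0 + q1 * y1 in hcs *.
have hs0 : 0 <= sx by rewrite /sx; apply: addr_ge0; apply: mulr_ge0.
have hs : sx <= r * z.
  rewrite -exprMn in hcs.
  have hrz : 0 <= r * z := mulr_ge0 hr0 hz0.
  set t := r * z in hcs hrz *; nra.
have hl : W + U * sx <= r * (W + U * z) by nra.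
rewrite -hr2 -exprMn.
have hl0 : 0 <= W + U * sx by apply: addr_ge0 => //; apply: mulr_ge0.
nra.
Qed.

Section Q.
Variables (s1 s2 : R).
Hypotheses (hs1 : 0 < s1) (hs2 : 0 < s2).
Local Notation q := (quartic_weight s1 s2).
Local Notation cc := ((Num.sqrt s1 + Num.sqrt s2) / Num.sqrt (s1 + s2)).

Lemma q_ge0 j : 0 <= q j. Proof. exact: sqrtr_ge0. Qed.

Lemma q_sq j : q j ^+ 2 = Num.sqrt (if j == ord0 then s1 else s2) / Num.sqrt (s1 + s2).
Proof.
rewrite /q /quartic_weight sqr_sqrtr ?sqrtr_ge0 //.
have h : 0 <= (if j == ord0 then s1 else s2) by case: ifP => _; apply: ltW.
by rewrite sqrtrM // sqrtrV // addr_ge0 // ltW.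
Qed.

Lemma q_sum : q ord0 ^+ 2 + q (lift ord0 ord0) ^+ 2 = cc.
Proof. by rewrite !q_sq /= -mulrDl. Qed.

Lemma cc_ge1 : 1 <= cc.
Proof.
have hp : 0 < Num.sqrt (s1 + s2) by rewrite sqrtr_gt0 addr_gt0.
rewrite /cc ler_pdivlMr // mul1r.
have ha := sqrtr_ge0 s1; have hb := sqrtr_ge0 s2.
have ha2 : Num.sqrt s1 ^+ 2 = s1 by rewrite sqr_sqrtr // ltW.
have hb2 : Num.sqrt s2 ^+ 2 = s2 by rewrite sqr_sqrtr // ltW.
have hd2 : Num.sqrt (s1 + s2) ^+ 2 = s1 + s2 by rewrite sqr_sqrtr // addr_ge0 // ltW.
set a := Num.sqrt s1 in ha ha2 *; set b := Num.sqrt s2 in hb hb2 *.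
set d := Num.sqrt (s1 + s2) in hp hd2 *.
nra.
Qed.

Lemma grp_and (P : spanprog R) i0 (hI : forall i, (sp_lab P i == 0%N) = (i == i0))
   x l : @grp (P_AND s1 s2) P i0 hI x l <=
   cc * (Wv x l + Uv i0 l * zv hI x) ^+ 2.
Proof.
case hz: (@rt_Z R P l).
  rewrite grp_Z // /RV U_Z // mul0r addr0 /=.
  rewrite /cvnorm /= !big_ord_recl big_ord0 /= !cabs_real !ger0_norm ?q_ge0 ?sqrtr_ge0 //.
  rewrite addr0 q_sum mul0r addr0 exprMn sqr_sqrtr //.
  exact: le_trans ler01 cc_ge1.
rewrite grp_nZ ?hz // /RV /= !big_ord_recl !big_ord0 /=.
rewrite !cabs_real !ger0_norm ?q_ge0 // /cabs /=. rewrite !mul0r !mul1r !addr0 !add0r.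
rewrite /zv /= !big_ord_recl big_ord0 addr0 -q_sum.
apply: and_ineq; rewrite ?q_ge0 ?yv_ge0 ?Wv_ge0 ?Uv_ge0 ?q_sum //.
exact: cc_ge1.
Qed.

Lemma cabs1' : cabs (1 : R[i]) = 1.
Proof. by rewrite /cabs /= expr1n expr0n /= addr0 sqrtr1. Qed.

Lemma grp_or (P : spanprog R) i0 (hI : forall i, (sp_lab P i == 0%N) = (i == i0))
   x l : @grp (P_OR s1 s2) P i0 hI x l <=
   cc * (Wv x l + Uv i0 l * zv hI x) ^+ 2.
Proof.
have hc1 := cc_ge1.
case hz: (@rt_Z R P l).
  rewrite grp_Z // /RV U_Z // mul0r addr0 /=.
  rewrite /cvnorm /= big_ord1 cabs_real cabs1' expr1n sqrtr1 normr1 mul1r.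
  have := Wv_ge0 x l; set w := Wv _ _; nra.
rewrite grp_nZ ?hz // /RV /= big_ord1 !big_ord_recl !big_ord0 /=.
rewrite !cabs_real !ger0_norm ?q_ge0 // /cabs /=. rewrite mul1r addr0.
rewrite /zv /= !big_ord_recl big_ord0 addr0 -q_sum.
apply: or_ineq; rewrite ?q_ge0 ?yv_ge0 ?Wv_ge0 ?Uv_ge0 ?q_sum //.
Qed.
End Q.
End H.

Unset Implicit Arguments.
Set Strict Implicit.

Theorem lemma3p4 (R : realType) (P : spanprog R) (n : nat) (s1 s2 : R)
    (P' : spanprog R) :
  sp_wf P ->
  sp_ninp P = n.+1 ->
  #|sp_I P 0| = 1%N ->
  0 < s1 -> 0 < s2 ->
  (P' = P_AND s1 s2 \/ P' = P_OR s1 s2) ->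
  opnorm (absmx (Bmat (rtcomp P' P))) ^+ 2 <=
    (Num.sqrt s1 + Num.sqrt s2) / Num.sqrt (s1 + s2) *
    opnorm (absmx (Bmat P)) ^+ 2.
Proof.
move=> _ _ /eqP/cards1P [i0 hI0] hs1 hs2 hP'.
have hI : forall i, (sp_lab P i == 0%N) = (i == i0).
  by move=> i; have := congr1 (fun S : {set sp_idx P} => i \in S) hI0; rewrite /sp_I !inE.
have hc0 : 0 <= (Num.sqrt s1 + Num.sqrt s2) / Num.sqrt (s1 + s2).
  exact: le_trans ler01 (cc_ge1 hs1 hs2).
case: hP' => ->; apply: opnorm_le => // x hx.
  apply: (main_gen (hI := hI) hx) => l; exact: grp_and.
apply: (main_gen (hI := hI) hx) => l; exact: grp_or.
Qed.
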